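(* Let $\mathcal{D}$ and $\mathcal{F}$ be semistable vector bundles on the Fargues–Fontaine curve $X$ with $\mathrm{HNvec}(\mathcal{D})=(\vec\beta)$, $\mathrm{HNvec}(\mathcal{F})=(\vec\gamma)$ and $\vec\beta\preceq\vec\gamma$. Let $\mathcal{E}$ be a vector bundle on $X$ with $\mathrm{HN}(\mathcal{E})\le\mathrm{HN}(\mathcal{D}\oplus\mathcal{F})$ (same endpoints), and suppose the maximal slope of $\mathcal{E}$ is strictly less than the slope of $\mathcal{F}$. Let $\mathcal{K}$ be a vector bundle on $X$ with the same rank and degree as $\mathcal{D}$ such that (i) the maximal slope of $\mathcal{K}$ is at most the maximal slope of $\mathcal{E}$, and (ii) $\mathcal{K}$ is not semistable. Then \[\deg(\mathcal{K}^\vee\otimes\mathcal{E})^{\ge 0}<\deg(\mathcal{K}^\vee\otimes\mathcal{K})^{\ge 0}+\deg(\mathcal{E}^\vee\otimes\mathcal{F})^{\ge 0}.\]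
   Context: $X=X_{E,F}$ is the Fargues–Fontaine curve. For a bundle $\mathcal{V}\simeq\bigoplus_{i=1}^s\mathcal{O}(d_i/h_i)^{m_i}$ with $d_1/h_1>\cdots>d_s/h_s$ in lowest terms ($h_i>0$), the HN vectors are $\mathrm{HNvec}(\mathcal{V})=(v_i)$ with $v_i=(m_ih_i,m_id_i)$; for a semistable bundle this is the single vector $(\mathrm{rank},\deg)$. For vectors with nonzero $x$-coordinate, $v\preceq w$ means slope of $v\le$ slope of $w$. $\mathrm{HN}$ is the Harder–Narasimhan polygon starting at the origin, and $P\le P'$ means $P$ lies on or below $P'$ with the same endpoints. $\mathcal{U}^{\ge 0}$ is the step of the HN filtration of $\mathcal{U}$ consisting of HN pieces of slope $\ge 0$. *)

(* Defs.v *)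
(* Vector bundles on the Fargues--Fontaine curve X_{E,F} are
   modelled through the classification theorem: every bundle is (up to
   isomorphism) a direct sum of semistable bundles, and a semistable bundle of
   rank r > 0 and degree d is O(d/r)-isotypic, determined by (r, d).
   A bundle is thus represented by a finite list of semistable summands
   (rank, degree). *)
From HB Require Import structures.
From mathcomp Require Import all_boot all_order all_algebra.
Set Implicit Arguments. Unset Strict Implicit. Unset Printing Implicit Defensive.
Import Order.TTheory GRing.Theory Num.Theory.
Local Open Scope ring_scope.

Definition piece := (nat * int)%type.
Definition bundle := seq piece.

Definition wf (V : bundle) : bool := all (fun p : piece => (0 < p.1)%N) V.

Definition pslope (p : piece) : rat := (p.2)%:~R / (p.1)%:R.

Definition rk (V : bundle) : nat := (\sum_(p <- V) p.1)%N.
Definition dg (V : bundle) : int := \sum_(p <- V) p.2.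

Definition slope (V : bundle) : rat := (dg V)%:~R / (rk V)%:R.

Definition maxslope (V : bundle) : rat :=
  foldr (fun p m => Num.max (pslope p) m) (pslope (head (1%N, 0) V)) V.

Definition semistable (V : bundle) : bool :=
  all (fun p => pslope p == pslope (head (1%N, 0) V)) V.

(* direct sum, dual, tensor product (tensor of semistable bundles of slopes
   l, m is semistable of slope l + m; ranks multiply) *)
Definition dsum (V W : bundle) : bundle := V ++ W.
Definition dual (V : bundle) : bundle := [seq (p.1, - p.2) | p <- V].
Definition tens (V W : bundle) : bundle :=
  [seq (((p : piece).1 * q.1)%N, p.2 * (q.1)%:Z + q.2 * (p.1)%:Z) | p : piece <- V, q : piece <- W].

(* degree of V^{>= 0}, the step of the HN filtration with slopes >= 0 *)
Definition deg_ge0 (V : bundle) : int := \sum_(p <- V | 0 <= p.2) p.2.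

(* Harder--Narasimhan polygon: summands sorted by decreasing slope, as a
   piecewise-linear function on [0, rk V] starting at the origin. *)
Definition hn_sorted (V : bundle) : bundle :=
  sort (fun p q : piece => pslope q <= pslope p) V.

Fixpoint hn_eval (l : bundle) (x : rat) : rat :=
  match l with
  | [::] => 0
  | p :: l' => if x <= (p.1)%:R then x * pslope p
               else (p.2)%:~R + hn_eval l' (x - (p.1)%:R)
  end.

Definition HN (V : bundle) (x : rat) : rat := hn_eval (hn_sorted V) x.

Definition HN_le (V W : bundle) : Prop :=
  rk V = rk W /\ dg V = dg W /\
  forall x : rat, 0 <= x -> x <= (rk V)%:R -> HN V x <= HN W x.

(* Main.v *)
Require Import Defs.
From mathcomp Require Import all_boot all_order all_algebra.
From mathcomp Require Import ring lra.
Import Order.TTheory GRing.Theory Num.Theory.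
Set Implicit Arguments. Unset Strict Implicit.
Local Open Scope ring_scope.

Definition rr (p : piece) : rat := (p.1)%:R.
Definition dd (p : piece) : rat := (p.2)%:~R.

Lemma intr_sum (I : Type) (s : seq I) (P : pred I) (f : I -> int) :
  (\sum_(i <- s | P i) f i)%:~R = \sum_(i <- s | P i) (f i)%:~R :> rat.
Proof.
elim: s => [|x s IH]; first by rewrite !big_nil.
by rewrite !big_cons; case: (P x); rewrite ?intrD IH.
Qed.

Lemma rk_rat V : (rk V)%:R = \sum_(p <- V) rr p :> rat.
Proof. by rewrite /rk natr_sum. Qed.

Lemma dg_rat V : (dg V)%:~R = \sum_(p <- V) dd p :> rat.
Proof. by rewrite /dg intr_sum. Qed.

Lemma rr_pos V p : wf V -> p \in V -> 0 < rr p.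
Proof. by move=> /allP H /H; rewrite /rr ltr0n. Qed.

Lemma pslopeE p : pslope p = dd p / rr p.
Proof. by []. Qed.

Lemma dd_of_slope p c : 0 < rr p -> pslope p = c -> dd p = c * rr p.
Proof. move=> h; rewrite pslopeE => <-; rewrite divfK //; exact: lt0r_neq0. Qed.

Lemma slope_le p c : 0 < rr p -> (pslope p <= c) = (dd p <= c * rr p).
Proof. by move=> h; rewrite pslopeE ler_pdivrMr. Qed.

Lemma slope_ge p c : 0 < rr p -> (c <= pslope p) = (c * rr p <= dd p).
Proof. by move=> h; rewrite pslopeE ler_pdivlMr. Qed.

Lemma degge0_tens V W :
  (deg_ge0 (tens (dual V) W))%:~R =
  \sum_(v <- V) \sum_(w <- W) Num.max 0 (dd w * rr v - dd v * rr w) :> rat.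
Proof.
rewrite /deg_ge0 big_mkcond intr_sum /tens /dual big_allpairs_dep big_map /=.
apply: eq_bigr => v _; apply: eq_bigr => w _ /=.
rewrite /dd /rr.
have E : ((- v.2) * (w.1)%:Z + w.2 * (v.1)%:Z)%:~R = (w.2)%:~R * (v.1)%:R - (v.2)%:~R * (w.1)%:R :> rat.
  by rewrite intrD !intrM intrN addrC mulNr.
rewrite -E; case: leP => h.
  by rewrite max_r // ler0z.
have h2 : ((- v.2) * (w.1)%:Z + w.2 * (v.1)%:Z)%:~R < 0 :> rat by rewrite ltrz0.
  by rewrite max_l ?mulr0z // ltW.
Qed.

Lemma sum_const_slope (V : bundle) c :
  (forall p, p \in V -> dd p = c * rr p) ->
  \sum_(p <- V) dd p = c * \sum_(p <- V) rr p.
Proof.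
move=> H; rewrite mulr_sumr big_seq_cond [RHS]big_seq_cond.
by apply: eq_bigr => p /andP [hp _]; rewrite H.
Qed.

Lemma ss_eq V : wf V -> semistable V -> (0 < rk V)%N ->
  forall p, p \in V -> dd p = slope V * rr p.
Proof.
move=> wV /allP sV rkV.
set c := pslope (head (1%N, 0) V).
have H : forall p, p \in V -> dd p = c * rr p.
  move=> p pV; apply: dd_of_slope; first exact: (rr_pos wV pV).
  by apply/eqP; apply: sV.
have -> : slope V = c.
  rewrite /slope dg_rat (sum_const_slope H) -rk_rat mulfK //.
  by rewrite pnatr_eq0 -lt0n.
exact: H.
Qed.

Lemma maxslope_ge V p : p \in V -> pslope p <= maxslope V.
Proof.
rewrite /maxslope; move: (pslope (head (1%N, 0) V)) => b.
elim: V => [|q V IH] //=; rewrite inE => /orP [/eqP -> | /IH h].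
  by rewrite le_max lexx.
by rewrite le_max h orbT.
Qed.

Lemma hn_prefix (l1 l2 : bundle) : wf l1 ->
  hn_eval (l1 ++ l2) (rk l1)%:R = (dg l1)%:~R.
Proof.
elim: l1 => [|q l1 IH] /=.
  by case: l2 => [|q l2] //=; rewrite /rk /dg !big_nil /= ?mul0r ?ler0n.
move=> /andP [q0 wl].
rewrite /rk /dg !big_cons -/(rk l1) -/(dg l1) natrD intrD.
case: ifP => h.
  have r0 : (rk l1)%:R = 0 :> rat by apply/eqP; rewrite eq_le ler0n andbT -(lerD2l ((q.1)%:R)) addr0.
  have l10 : l1 = [::].
    case: l1 r0 wl {IH h} => [|t l1] //; rewrite /rk big_cons natrD => E /andP [t0 _].
    exfalso; move: E; apply/eqP; rewrite gt_eqF //.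
    by apply: ltr_wpDr => //; rewrite ltr0n.
  rewrite r0 l10 /dg big_nil addr0 /= /pslope mulrC divfK ?addr0 //.
  by rewrite pnatr_eq0 -lt0n.
by rewrite addrAC subrr add0r IH.
Qed.

Lemma hn_upper (l : bundle) M x : wf l ->
  (forall p, p \in l -> M * rr p <= dd p) -> 0 <= x -> x <= (rk l)%:R ->
  hn_eval l x + M * ((rk l)%:R - x) <= (dg l)%:~R.
Proof.
elim: l x => [|q l IH] x /=.
  move=> _ _ h1 h2; rewrite /rk /dg !big_nil /= in h2 *.
  have -> : x = 0 by lra.
  by rewrite subrr mulr0 addr0.
move=> /andP [q0 wl] H x0.
have Hq := H q (mem_head _ _).
have Hl : forall p, p \in l -> M * rr p <= dd p by move=> p pl; apply: H; rewrite inE pl orbT.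
have sl : M * (rk l)%:R <= (dg l)%:~R.
  rewrite rk_rat dg_rat mulr_sumr big_seq_cond [X in _ <= X]big_seq_cond.
  by apply: ler_sum => p /andP [pl _]; apply: Hl.
rewrite /rk /dg !big_cons -/(rk l) -/(dg l) natrD intrD => xle.
case: ifP => h.
  have rq : 0 < rr q by rewrite /rr ltr0n.
  have := dd_of_slope rq (erefl (pslope q)) => eq.
  have : M <= pslope q by rewrite slope_ge.
  move: eq sl h Hq; rewrite -/(rr q) -/(dd q).
  move: (pslope q) (dd q) (rr q) (rk l)%:R (dg l)%:~R => s d r R G.
  move=> -> ? ? ? ?.
  have : 0 <= (s - M) * (r - x) by apply: mulr_ge0; lra.
  nra.
have h' : 0 <= x - (q.1)%:R by move/negbT: h; rewrite -ltNge subr_ge0 => /ltW.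
have := IH (x - (q.1)%:R) wl Hl h'.
rewrite lerBlDl => /(_ xle).
move: h' xle; rewrite /dd; lra.
Qed.

Lemma rk_perm (s t : bundle) : perm_eq s t -> rk s = rk t.
Proof. by move=> h; rewrite /rk (perm_big _ h). Qed.
Lemma dg_perm (s t : bundle) : perm_eq s t -> dg s = dg t.
Proof. by move=> h; rewrite /dg (perm_big _ h). Qed.

Lemma E_ge (E W : bundle) M : wf E -> wf W -> HN_le E W ->
  (forall p, p \in W -> M * rr p <= dd p) -> forall e, e \in E -> M * rr e <= dd e.
Proof.
move=> wE wW [rkEW [dgEW HNle]] HW.
set s := hn_sorted E.
have ps : perm_eq s E by rewrite /s /hn_sorted perm_sort.
set sW := hn_sorted W.
have psW : perm_eq sW W by rewrite /sW /hn_sorted perm_sort.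
have wsW : wf sW by rewrite /wf (perm_all _ psW).
have HsW : forall p, p \in sW -> M * rr p <= dd p by move=> p; rewrite (perm_mem psW); exact: HW.
have ws : wf s by rewrite /wf (perm_all _ ps).
have srt : sorted (fun p q : piece => pslope q <= pslope p) s.
  by apply: sort_sorted => a b; exact: le_total.
have tr : transitive (fun p q : piece => pslope q <= pslope p).
  by move=> a b c h1 h2; exact: le_trans h2 h1.
move=> e; rewrite -(perm_mem ps).
case/lastP Hs: s ws srt => [|s' p] //= ws srt.
rewrite -cats1 in ws srt *.
have ws' : wf s' by move: ws; rewrite /wf all_cat => /andP [].
have rp : 0 < rr p by apply: (rr_pos ws); rewrite mem_cat mem_head orbT.
have Hp : M * rr p <= dd p.
  have h1 := hn_prefix [:: p] ws'.
  have rks : rk E = (rk s' + p.1)%N.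
    by rewrite -(rk_perm ps) Hs -cats1 /rk big_cat big_cons big_nil /= addn0.
  have dgs : dg E = dg s' + p.2.
    by rewrite -(dg_perm ps) Hs -cats1 /dg big_cat big_cons big_nil /= addr0.
  have x0 : 0 <= (rk s')%:R :> rat by [].
  have x1 : (rk s')%:R <= (rk E)%:R :> rat by rewrite ler_nat rks leq_addr.
  have := HNle _ x0 x1; rewrite /HN -/s Hs -cats1 h1.
  have := hn_upper wsW HsW x0.
  rewrite (rk_perm psW) (dg_perm psW) -rkEW => /(_ x1).
  rewrite -dgEW rks dgs natrD intrD /rr /dd; lra.
move: srt; rewrite (sorted_pairwise tr) pairwise_cat /= andbT => /andP [/allP ar _].
rewrite mem_cat inE => /orP [es' | /eqP ->] //.
have := ar e es'; rewrite /= andbT => h.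
have re : 0 < rr e by apply: (rr_pos ws'). 
move: Hp; rewrite -!slope_ge // => h'; exact: le_trans h' h.
Qed.

Definition TT (V W : bundle) : rat :=
  \sum_(v <- V) \sum_(w <- W) Num.max 0 (dd w * rr v - dd v * rr w).

Lemma sum_lin (V : bundle) (a b : rat) :
  \sum_(w <- V) (dd w * a - b * rr w) = (\sum_(w <- V) dd w) * a - b * \sum_(w <- V) rr w.
Proof. by rewrite sumrB mulr_suml mulr_sumr. Qed.

Lemma max_sum_ge (V : bundle) (a b : rat) :
  \sum_(w <- V) (dd w * a - b * rr w) <= \sum_(w <- V) Num.max 0 (dd w * a - b * rr w).
Proof. by apply: ler_sum => w _; rewrite le_max lexx orbT. Qed.

Lemma max_sum_ge0 (V : bundle) (a b : rat) :
  0 <= \sum_(w <- V) Num.max 0 (dd w * a - b * rr w).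
Proof. by apply: sumr_ge0 => w _; rewrite le_max lexx. Qed.

Lemma main_ineq (K E F : bundle) M N A b f :
  (forall e, e \in E -> M * rr e <= dd e /\ dd e <= A * rr e) ->
  (forall e, e \in E -> 0 <= rr e) -> (forall k, k \in K -> 0 <= rr k) ->
  (forall k, k \in K -> dd k <= A * rr k) ->
  (forall g, g \in F -> dd g = N * rr g) ->
  \sum_(k <- K) rr k = b -> \sum_(k <- K) dd k = M * b ->
  \sum_(e <- E) rr e = b + f -> \sum_(e <- E) dd e = M * b + N * f ->
  \sum_(g <- F) rr g = f -> 0 < f -> A < N ->
  (exists2 k, k \in K & M * rr k < dd k) ->
  TT K E < TT K K + TT E F.
Proof.
move=> HE HE0 HK0 HKA HF sKr sKd sEr sEd sFr f0 AN [k0 k0K k0M].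
have AM : 0 < A - M.
  have := HK0 _ k0K; have := HKA _ k0K => h1 h2.
  rewrite subr_gt0; apply: contraLR k0M; rewrite -!leNgt => h.
  by apply: le_trans h1 _; apply: ler_wpM2r.
have T3ge : f * b * (N - M) <= TT E F.
  apply: le_trans (ler_sum _ (fun e _ => max_sum_ge F (rr e) (dd e))).
  rewrite (eq_bigr (fun e => (N * f) * rr e - f * dd e)); last first.
    by move=> e _; rewrite sum_lin (sum_const_slope HF) sFr (mulrC (dd e)).
  rewrite sumrB -!mulr_sumr sEr sEd; lra.
have Pge : Num.max 0 (dd k0 - M * rr k0) <= \sum_(k <- K) Num.max 0 (dd k - M * rr k).
  rewrite (big_rem k0 k0K) /= lerDl; apply: sumr_ge0 => k _; by rewrite le_max lexx.
have Pgt : 0 < Num.max 0 (dd k0 - M * rr k0) by rewrite lt_max subr_gt0 k0M orbT.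
set P := \sum_(k <- K) _ in Pge.
have key : forall k, k \in K ->
  (A - M) * (\sum_(e <- E) Num.max 0 (dd e * rr k - dd k * rr e)) <=
  (A - M) * (\sum_(k' <- K) Num.max 0 (dd k' * rr k - dd k * rr k'))
  + ((A - M) * f * (N - M) + f * (A - M) * M) * rr k - (f * (A - M)) * dd k
  - (f * (N - A)) * Num.max 0 (dd k - M * rr k).
  move=> k kK.
  have rk0 := HK0 _ kK.
  have H0 := max_sum_ge0 K (rr k) (dd k).
  have H1 := max_sum_ge K (rr k) (dd k).
  rewrite sum_lin sKr sKd in H1.
  set Hk := \sum_(k' <- K) _ in H0 H1 *.
  case: (leP (dd k) (M * rr k)) => hk.
    have -> : Num.max 0 (dd k - M * rr k) = 0 by rewrite max_l // subr_le0.
    have G1 : \sum_(e <- E) Num.max 0 (dd e * rr k - dd k * rr e) <= (M * b + N * f) * rr k - dd k * (b + f).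
      rewrite -sEr -sEd -sum_lin big_seq_cond [X in _ <= X]big_seq_cond.
      apply: ler_sum => e /andP [eE _]; rewrite max_r //.
      have [h1 h2] := HE _ eE; have := HE0 _ eE => h3.
      have : M * rr e * rr k <= dd e * rr k by apply: ler_wpM2r.
      have : dd k * rr e <= M * rr k * rr e by apply: ler_wpM2r.
      lra.
    have G2 := ler_wpM2l (ltW AM) G1.
    have H2 : (A - M) * (b * (M * rr k - dd k)) <= (A - M) * Hk.
      apply: ler_wpM2l; first exact: ltW.
      move: H1; lra.
    move: G2 H2; set G := \sum_(e <- E) _; nra.
  have G1 : (A - M) * \sum_(e <- E) Num.max 0 (dd e * rr k - dd k * rr e) <= (f * (N - M)) * (A * rr k - dd k).
    have -> : f * (N - M) = \sum_(e <- E) (dd e - M * rr e).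
      rewrite sumrB sEd -mulr_sumr sEr; lra.
    rewrite mulr_sumr mulr_suml big_seq_cond [X in _ <= X]big_seq_cond.
    apply: ler_sum => e /andP [eE _].
    have [h1 h2] := HE _ eE; have := HE0 _ eE => h3.
    have hA := HKA _ kK.
    case: (leP 0 (dd e * rr k - dd k * rr e)) => hv.
      have : (dd e - A * rr e) * (dd k - M * rr k) <= 0.
        apply: mulr_le0_ge0; lra.
      nra.

    rewrite mulr0; apply: mulr_ge0; lra.
  have -> : Num.max 0 (dd k - M * rr k) = dd k - M * rr k by rewrite max_r // subr_ge0 ltW.
  have H2 : (A - M) * 0 <= (A - M) * Hk by apply: ler_wpM2l; [exact: ltW | exact: H0].
  move: G1 H2; set G := \sum_(e <- E) _; nra.
have S : \sum_(k <- K) (A - M) * (\sum_(e <- E) Num.max 0 (dd e * rr k - dd k * rr e)) <=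
  \sum_(k <- K) ((A - M) * (\sum_(k' <- K) Num.max 0 (dd k' * rr k - dd k * rr k'))
  + ((A - M) * f * (N - M) + f * (A - M) * M) * rr k - (f * (A - M)) * dd k
  - (f * (N - A)) * Num.max 0 (dd k - M * rr k)).
  rewrite big_seq_cond [X in _ <= X]big_seq_cond; apply: ler_sum => k /andP [kK _]; exact: key.
rewrite !big_split /= !sumrN -!mulr_sumr sKr sKd -/P in S.
rewrite -/(TT K E) -/(TT K K) in S.
have : (A - M) * TT K E < (A - M) * (TT K K + TT E F).
  have h : 0 < f * (N - A) * P by apply: mulr_gt0; [apply: mulr_gt0; lra | exact: lt_le_trans Pge].
  have h2 : (A - M) * (f * b * (N - M)) <= (A - M) * TT E F by apply: ler_wpM2l; [exact: ltW | exact: T3ge].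
  move: S h h2; set X := TT K E; set Y := TT K K; set Z := TT E F; nra.
by rewrite ltr_pM2l.
Qed.

Theorem theorem5p1 (D F E K : bundle) :
  wf D -> wf F -> wf E -> wf K ->
  semistable D -> semistable F -> (0 < rk D)%N -> (0 < rk F)%N ->
  slope D <= slope F ->
  HN_le E (dsum D F) ->
  maxslope E < slope F ->
  rk K = rk D -> dg K = dg D ->
  maxslope K <= maxslope E ->
  ~~ semistable K ->
  deg_ge0 (tens (dual K) E) < deg_ge0 (tens (dual K) K) + deg_ge0 (tens (dual E) F).
Proof.
move=> wD wF wE wK sD sF rD rF MN HNle AN rKD dKD KA nsK.
set M := slope D in MN *; set N := slope F in MN AN *; set A := maxslope E in AN KA *.
have HD := ss_eq wD sD rD; have HF := ss_eq wF sF rF.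
rewrite -/M in HD; rewrite -/N in HF.
have wDF : wf (dsum D F) by rewrite /wf /dsum all_cat; apply/andP; split.
have HW : forall p, p \in dsum D F -> M * rr p <= dd p.
  move=> p; rewrite mem_cat => /orP [pD | pF]; first by rewrite HD.
  rewrite HF //; apply: ler_wpM2r => //; exact: ltW (rr_pos wF pF).
have HEge := E_ge wE wDF HNle HW.
have HE : forall e, e \in E -> M * rr e <= dd e /\ dd e <= A * rr e.
  move=> e eE; split; first exact: HEge.
  by rewrite -slope_le ?(rr_pos wE eE) // maxslope_ge.
have HKA : forall k, k \in K -> dd k <= A * rr k.
  move=> k kK; rewrite -slope_le ?(rr_pos wK kK) //.
  exact: le_trans (maxslope_ge kK) KA.
have [rkE [dgE _]] := HNle.
have sKr : \sum_(k <- K) rr k = (rk D)%:R by rewrite -rk_rat rKD.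
have sKd : \sum_(k <- K) dd k = M * (rk D)%:R.
  by rewrite -dg_rat dKD dg_rat (sum_const_slope HD) rk_rat.
have sEr : \sum_(e <- E) rr e = (rk D)%:R + (rk F)%:R.
  by rewrite -rk_rat rkE /rk /dsum big_cat natrD.
have sEd : \sum_(e <- E) dd e = M * (rk D)%:R + N * (rk F)%:R.
  by rewrite -dg_rat dgE /dsum /dg big_cat intrD -/(dg D) -/(dg F) !dg_rat (sum_const_slope HD) (sum_const_slope HF) !rk_rat.
have sFr : \sum_(g <- F) rr g = (rk F)%:R by rewrite rk_rat.
have f0 : 0 < (rk F)%:R :> rat by rewrite ltr0n.
have ex : exists2 k, k \in K & M * rr k < dd k.
  case: (boolP (has (fun k => M * rr k < dd k) K)) => [/hasP [k kK kM] | /hasPn H].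
    by exists k.
  exfalso; move/negP: nsK; apply.
  have Hk : forall k, k \in K -> dd k = M * rr k.
    move=> k kK.
    have h1 : \sum_(k' <- K) (M * rr k' - dd k') = 0.
      by rewrite sumrB -mulr_sumr sKr sKd subrr.
    rewrite (big_rem k kK) /= in h1.
    have h2 : 0 <= \sum_(k' <- rem k K) (M * rr k' - dd k').
      rewrite big_seq; apply: sumr_ge0 => k' /mem_rem k'K; rewrite subr_ge0 leNgt.
      exact: H.
    have h3 : dd k <= M * rr k by rewrite leNgt; exact: H.
    lra.
  have Hs : forall k, k \in K -> pslope k = M.
    move=> k kK; rewrite pslopeE Hk // mulfK //; exact: lt0r_neq0 (rr_pos wK kK).
  case: K {wK rKD dKD KA HKA sKr sKd H} Hk Hs => [|k0 K'] // _ Hs.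
  apply/allP => k kK; rewrite /= !Hs ?mem_head //.
have := main_ineq HE (fun e eE => ltW (rr_pos wE eE)) (fun k kK => ltW (rr_pos wK kK))
  HKA HF sKr sKd sEr sEd sFr f0 AN ex.
by rewrite -(ltr_int rat) intrD !degge0_tens.
Qed.
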